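(* Let $p,q\ge 0$ be integers, $n=p+q\ge 1$, and let $\mathcal{C}\ell(p,q)$ be the complex Clifford algebra with identity $e$ and generators $e^1,\dots,e^n$ satisfying $e^ae^b+e^be^a=2\eta^{ab}e$. For $U\in\mathcal{C}\ell(p,q)$ let $F(U)=e^aUe_a$ (summation over $a=1,\dots,n$, with $e_a=\eta_{ab}e^b$), $F^0(U)=U$, $F^{l+1}(U)=F(F^l(U))$, and let $\lambda_k=(-1)^k(n-2k)$, $k=0,\dots,n$. (i) If $n$ is even, then the $(n+1)\times(n+1)$ matrix $A=(a_{kl})_{k,l=0}^{n}$ with $a_{kl}=(\lambda_l)^k$ is invertible, and, writing $B=(b_{kl})_{k,l=0}^n=A^{-1}$, for every $U\in\mathcal{C}\ell(p,q)$ and every $k=0,\dots,n$, $$\pi_k(U)=\sum_{l=0}^n b_{kl}F^l(U).$$ (ii) If $n$ is odd, then the $\frac{n+1}{2}\times\frac{n+1}{2}$ matrix $D=(d_{kl})_{k,l=0}^{(n-1)/2}$ with $d_{kl}=(\lambda_l)^k$ is invertible, and, writing $G=(g_{kl})=D^{-1}$, for every $U\in\mathcal{C}\ell(p,q)$ and every $k=0,\dots,\frac{n-1}{2}$, $$\pi_k(U)+\pi_{n-k}(U)=\sum_{l=0}^{(n-1)/2} g_{kl}F^l(U).$$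
   Context: $\eta=(\eta^{ab})=(\eta_{ab})=\mathrm{diag}(1,\dots,1,-1,\dots,-1)$ with $p$ entries $1$ and $q$ entries $-1$. $\mathcal{C}\ell(p,q)$ is the associative unital complex algebra of dimension $2^n$ with basis $e$ and $e^{a_1\dots a_k}=e^{a_1}\cdots e^{a_k}$ for $1\le a_1<\dots<a_k\le n$, $k=1,\dots,n$. For $k=0,\dots,n$, $\mathcal{C}\ell_k(p,q)$ is the span of the basis elements $e^{a_1\dots a_k}$ with exactly $k$ indices ($\mathcal{C}\ell_0=\mathbb{C}e$), and $\pi_k:\mathcal{C}\ell(p,q)\to\mathcal{C}\ell_k(p,q)$ is the projection with respect to the direct sum decomposition $\mathcal{C}\ell(p,q)=\bigoplus_{k=0}^n\mathcal{C}\ell_k(p,q)$. *)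

(* Defs.v *)
From HB Require Import structures.
From mathcomp Require Import all_boot all_order all_algebra.
From mathcomp Require Import complex.
From mathcomp Require Import reals.
Set Implicit Arguments. Unset Strict Implicit. Unset Printing Implicit Defensive.
Import Order.TTheory GRing.Theory Num.Theory.
Local Open Scope ring_scope.
Local Open Scope complex_scope.

Notation CC R := (R[i]) (only parsing).

Section Clifford.
Variables (R : realType) (p q : nat).
Local Notation n := (p + q)%N.
Local Notation C := (R[i]).
Variable (A : algType C).
Variable (e : 'I_n -> A).

Definition eta_diag (a : 'I_n) : C := if (a < p)%N then 1 else -1.

(* eta^{ab} = eta_{ab} *)
Definition eta (a b : 'I_n) : C := if a == b then eta_diag a else 0.

Definition clifford_relations : Prop :=
  forall a b : 'I_n, e a * e b + e b * e a = (2 * eta a b) *: 1.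

(* basis element e^{a_1 ... a_k}, a_1 < ... < a_k (enum of a set of ordinals is increasing);
   blade set0 = e (the identity) *)
Definition blade (S : {set 'I_n}) : A := \prod_(a <- enum S) e a.

Definition blade_comb (c : {ffun {set 'I_n} -> C}) : A :=
  \sum_(S : {set 'I_n}) c S *: blade S.

(* the blades form a basis of A (so A has dimension 2^n): A is Cl(p,q) *)
Definition clifford_basis : Prop :=
  (forall U : A, exists c, U = blade_comb c) /\
  (forall c, blade_comb c = 0 -> c = 0).

(* pi_k(U) where U has coordinates c in the blade basis *)
Definition grade_proj (k : nat) (c : {ffun {set 'I_n} -> C}) : A :=
  \sum_(S : {set 'I_n} | #|S| == k) c S *: blade S.

(* F(U) = e^a U e_a with e_a = eta_{ab} e^b = eta_{aa} e^a *)
Definition cliffF (U : A) : A := \sum_(a < n) eta_diag a *: (e a * U * e a).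

Definition cliffF_iter (l : nat) (U : A) : A := iter l cliffF U.

End Clifford.

Definition lam (R : realType) (n k : nat) : R[i] := (-1) ^+ k * (n%:R - 2 * k%:R).

(* Main.v *)
Require Import Defs.
From HB Require Import structures.
From mathcomp Require Import all_boot all_order all_algebra.
From mathcomp Require Import complex.
From mathcomp Require Import reals.
From mathcomp Require Import zify ring lra.
Import Order.TTheory GRing.Theory Num.Theory.
Local Open Scope ring_scope.

Section Aux.
Variables (R : realType) (p q : nat) (A : algType R[i]) (e : 'I_(p + q) -> A).
Hypothesis cliff : clifford_relations e.

Lemma eta2 (a : 'I_(p+q)) : eta_diag R a * eta_diag R a = 1.
Proof. by rewrite /eta_diag; case: ifP => _; rewrite ?mulr1 ?mulrNN ?mulr1. Qed.

Lemma esq (a : 'I_(p+q)) : e a * e a = eta_diag R a *: 1.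
Proof.
have := cliff a a; rewrite /Defs.eta eqxx => H.
apply: (@scalerI _ _ 2); first by rewrite pnatr_eq0.
by rewrite scalerA -H scaler_nat mulr2n.
Qed.

Lemma eanti (a b : 'I_(p+q)) : a != b -> e a * e b = - (e b * e a).
Proof.
move=> ab; have := cliff a b; rewrite /Defs.eta (negbTE ab) mulr0 scale0r.
by move/eqP; rewrite addr_eq0 => /eqP.
Qed.

Lemma prod_move (a : 'I_(p+q)) (s : seq 'I_(p+q)) : a \notin s ->
  (\prod_(x <- s) e x) * e a = (-1) ^+ (size s) *: (e a * \prod_(x <- s) e x).
Proof.
elim: s => [|x s IH] /=; first by rewrite big_nil mulr1 mul1r expr0 scale1r.
rewrite in_cons negb_or => /andP[ax as_].
rewrite big_cons -mulrA IH // -scalerAr [e x * (e a * _)]mulrA [e x * e a]eanti 1?eq_sym //.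
by rewrite exprS mulN1r scaleNr mulNr scalerN mulrA.
Qed.

Lemma conj_prod (a : 'I_(p+q)) (s : seq 'I_(p+q)) : uniq s ->
  e a * (\prod_(x <- s) e x) * e a
    = ((-1) ^+ (size s + (a \in s)) * eta_diag R a) *: \prod_(x <- s) e x.
Proof.
elim: s => [|x s IH] /=.
  by rewrite big_nil mulr1 esq expr0 mul1r.
move=> /andP[xs us]; rewrite big_cons in_cons.
have [->|ax] := eqVneq a x.
  rewrite /= mulrA esq -scalerAl mul1r -scalerAl prod_move // scalerA.
  by rewrite addn1 !exprS !mulN1r opprK mulrC.
rewrite /= mulrA eanti // !mulNr -!mulrA (mulrA (e a)) IH // -scalerAr.
by rewrite addSn exprS mulN1r mulNr scaleNr.
Qed.


Lemma sum_sign (S : {set 'I_(p+q)}) :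
  \sum_(a < p + q) ((-1) ^+ (a \in S) : R[i]) = (p + q)%:R - 2 * #|S|%:R.
Proof.
rewrite (bigID (fun a => a \in S)) /=.
rewrite (eq_bigr (fun _ => -1)); last by move=> a ->.
rewrite (eq_bigr (fun _ => 1) (P := fun a => a \notin S)); last by move=> a /negbTE ->.
rewrite !sumr_const /= -!/(card _).
have -> : #|(fun i : 'I_(p+q) => i \notin S)| = (#|'I_(p+q)| - #|S|)%N.
  rewrite -(cardC (mem S)) addKn; apply: eq_card => i //.
rewrite card_ord.
have hk : (#|S| <= p + q)%N by have := max_card (mem S); rewrite card_ord.
rewrite natrB // -mulNrn mulr_natr; ring.
Qed.

Lemma F_blade (S : {set 'I_(p+q)}) :
  cliffF e (blade e S) = lam R (p + q) #|S| *: blade e S.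
Proof.
rewrite /cliffF /blade.
rewrite (eq_bigr (fun a => (-1) ^+ (#|S| + (a \in S)) *: \prod_(x <- enum S) e x)); last first.
  move=> a _; rewrite conj_prod ?enum_uniq // mem_enum -cardE scalerA mulrA.
  by rewrite mulrC mulrA eta2 mul1r.
rewrite -scaler_suml /lam; congr (_ *: _).
by rewrite -sum_sign mulr_sumr; apply: eq_bigr => a _; rewrite exprD.
Qed.

Lemma F_sum (d : {set 'I_(p+q)} -> R[i]) :
  cliffF e (\sum_(S : {set 'I_(p+q)}) d S *: blade e S) = \sum_(S : {set 'I_(p+q)}) d S *: cliffF e (blade e S).
Proof.
rewrite /cliffF.
under eq_bigr do rewrite mulr_sumr mulr_suml scaler_sumr.
rewrite exchange_big /=; apply: eq_bigr => S _.
rewrite scaler_sumr; apply: eq_bigr => a _.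
by rewrite -scalerAr -scalerAl !scalerA mulrC.
Qed.

Lemma F_iter (c : {ffun {set 'I_(p+q)} -> R[i]}) l :
  cliffF_iter e l (blade_comb e c)
    = \sum_(S : {set 'I_(p+q)}) (lam R (p + q) #|S| ^+ l * c S) *: blade e S.
Proof.
rewrite /cliffF_iter; elim: l => [|l IH].
  by rewrite /= /blade_comb; apply: eq_bigr => S _; rewrite expr0 mul1r.
rewrite iterS IH F_sum; apply: eq_bigr => S _.
by rewrite F_blade scalerA; congr (_ *: _); rewrite /lam exprS; ring.
Qed.
End Aux.
Definition lamZ (n k : nat) : int := (-1) ^+ k * (n%:Z - 2 * k%:Z).

Lemma lamE (R : realType) n k : lam R n k = (lamZ n k)%:~R.
Proof. by rewrite /lam /lamZ rmorphM rmorphXn rmorphN rmorph1 rmorphB rmorphM. Qed.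

Lemma sgn k : (-1) ^+ k = (if odd k then -1 else 1 : int).
Proof. by rewrite -signr_odd; case: (odd k). Qed.

Lemma lamZ_inj_even n k j : ~~ odd n -> (k <= n)%N -> (j <= n)%N ->
  lamZ n k = lamZ n j -> k = j.
Proof.
rewrite /lamZ !sgn => hn hk hj.
case hok: (odd k); case hoj: (odd j); lia.
Qed.

Lemma lamZ_inj_odd n k j : (k <= n./2)%N -> (j <= n./2)%N ->
  lamZ n k = lamZ n j -> k = j.
Proof.
rewrite /lamZ !sgn => hk hj.
case hok: (odd k); case hoj: (odd j); lia.
Qed.

Lemma lamZ_sym n k : odd n -> (k <= n)%N -> lamZ n k = lamZ n (n - k).
Proof.
rewrite /lamZ !sgn => hn hk.
rewrite oddB // hn.
case hok: (odd k) => /=; lia.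
Qed.

Lemma vdm_unit (R : realType) N (f : nat -> R[i]) :
  (forall k j, (k < N)%N -> (j < N)%N -> f k = f j -> k = j) ->
  (\matrix_(k < N, l < N) f l ^+ k) \in unitmx.
Proof.
move=> finj.
have -> : (\matrix_(k < N, l < N) f l ^+ k) = Vandermonde N (\row_(l < N) f l).
  by apply/matrixP => i j; rewrite !mxE.
rewrite unitmxE det_Vandermonde unitfE; apply/prodf_neq0 => i _.
apply/prodf_neq0 => j ij.
rewrite !mxE subr_eq0; apply/eqP => /finj h.
have := h (ltn_ord j) (ltn_ord i); move=> /eqP; rewrite (gtn_eqF ij) //.
Qed.

Theorem theorem4 (R : realType) (p q : nat) (A : algType R[i])
    (e : 'I_(p + q) -> A) :
  (1 <= p + q)%N ->
  clifford_relations e -> clifford_basis e ->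
  (~~ odd (p + q) ->
     let Am := \matrix_(k < (p + q).+1, l < (p + q).+1) lam R (p + q) l ^+ k in
     Am \in unitmx /\
     forall (U : A) (c : {ffun {set 'I_(p + q)} -> R[i]}), U = blade_comb e c ->
     forall k : 'I_(p + q).+1,
       grade_proj e k c = \sum_(l < (p + q).+1) invmx Am k l *: cliffF_iter e l U) /\
  (odd (p + q) ->
     let Dm := \matrix_(k < (p + q)./2.+1, l < (p + q)./2.+1) lam R (p + q) l ^+ k in
     Dm \in unitmx /\
     forall (U : A) (c : {ffun {set 'I_(p + q)} -> R[i]}), U = blade_comb e c ->
     forall k : 'I_(p + q)./2.+1,
       grade_proj e k c + grade_proj e (p + q - k) c
         = \sum_(l < (p + q)./2.+1) invmx Dm k l *: cliffF_iter e l U).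
Proof.
move=> n1 cliff _.
have hS : forall S : {set 'I_(p+q)}, (#|S| <= p + q)%N.
  by move=> S; have := max_card (mem S); rewrite card_ord.
have expand : forall N (B : 'M[R[i]]_N) (k : 'I_N) (c : {ffun {set 'I_(p + q)} -> R[i]}),
  \sum_(l < N) B k l *: cliffF_iter e l (blade_comb e c)
  = \sum_(S : {set 'I_(p+q)}) ((\sum_(l < N) B k l * lam R (p + q) #|S| ^+ l) * c S) *: blade e S.
  move=> N B k c.
  under eq_bigr do rewrite F_iter // scaler_sumr.
  rewrite exchange_big; apply: eq_bigr => S _; rewrite mulr_suml scaler_suml.
  by apply: eq_bigr => l _; rewrite scalerA mulrA.
split.
  move=> hev Am.
  have uA : Am \in unitmx.
    apply: vdm_unit => k j hk hj; rewrite !lamE => /eqP; rewrite eqr_int => /eqP.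
    by apply: lamZ_inj_even.
  split => // U c -> k.
  rewrite expand /grade_proj big_mkcond; apply: eq_bigr => S _.
  have Aij : forall i j, Am i j = lam R (p+q) j ^+ i by move=> i j; rewrite /Am mxE.
  have -> : \sum_(l < (p + q).+1) invmx Am k l * lam R (p + q) #|S| ^+ l = (#|S| == k)%:R.
    transitivity ((invmx Am *m Am) k (inord #|S|)).
      by rewrite mxE; apply: eq_bigr => j _; rewrite Aij inordK // ltnS hS.
    rewrite mulVmx // mxE; have -> // : (k == inord #|S|) = (#|S| == k).
    rewrite eq_sym; apply/eqP/eqP => [<-|h]; first by rewrite inordK // ltnS hS.
    by apply: val_inj; rewrite /= inordK // ltnS hS.
  by case: eqP => _; rewrite ?mul1r ?mul0r ?scale0r.
move=> hod Dm.
have hn := odd_double_half (p + q); rewrite hod /= in hn.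
have uD : Dm \in unitmx.
  apply: vdm_unit => k j hk hj; rewrite !lamE => /eqP; rewrite eqr_int => /eqP.
  by apply: lamZ_inj_odd; rewrite -ltnS.
split => // U c -> k.
have G : forall k', grade_proj e k' c = \sum_(S : {set 'I_(p+q)}) (if #|S| == k' then c S *: blade e S else 0).
  by move=> k'; rewrite /grade_proj big_mkcond.
rewrite expand !G -big_split /=; apply: eq_bigr => S _.
have hm := hS S; set m := #|S| in hm *.
set j := if (m <= (p + q)./2)%N then m else (p + q - m)%N.
have hj : (j <= (p + q)./2)%N by rewrite /j; case: ifP => ?; lia.
have lj : lam R (p + q) m = lam R (p + q) j.
  by rewrite /j; case: ifP => // _; rewrite !lamE lamZ_sym.
have Dij : forall i j, Dm i j = lam R (p+q) j ^+ i by move=> i j'; rewrite /Dm mxE.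
have -> : \sum_(l < (p + q)./2.+1) invmx Dm k l * lam R (p + q) m ^+ l = (j == k)%:R.
  transitivity ((invmx Dm *m Dm) k (inord j)).
    by rewrite mxE; apply: eq_bigr => l _; rewrite Dij inordK // lj.
  rewrite mulVmx // mxE; have -> // : (k == inord j) = (j == k).
  rewrite eq_sym; apply/eqP/eqP => [<-|h]; first by rewrite inordK.
  by apply: val_inj; rewrite /= inordK.
have hk := ltn_ord k; rewrite ltnS in hk.
have -> : (j == k) = (m == k) || (m == p + q - k)%N.
  rewrite /j; case: ifP => ?; lia.
have [h1|h1] := eqVneq m k; have [h2|h2] := eqVneq m (p + q - k)%N;
  rewrite /= ?mul1r ?mul0r ?scale0r ?addr0 ?add0r //; lia.
Qed.
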